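(* Let $n,r\ge1$ be integers and $\mathbf G=\mathbf G(r,1,n)$ with the subgroup sequence, coset leaders and initial vector described in the context. Then the subgroup decoding algorithm decodes robustly: for all $g\in\mathbf G$, any received vector in the decoding region of $g$ decodes to $g$.
   Context: $\mathbf G(r,1,n)$ is the group of $n\times n$ complex monomial matrices whose nonzero entries are $r$-th roots of unity. Let $\xi=e^{2\pi i/r}$, let $a_i$ ($1\le i\le n$) be the diagonal matrix multiplying the $i$-th coordinate by $\xi$, and $b_j$ ($1\le j<n$) the permutation matrix swapping coordinates $j$ and $j+1$. Subgroups (block diagonal): $\mathbf G_0=\{I\}$, $\mathbf G_{2l-1}=\mathbf G(r,1,l)\oplus\{I_{n-l}\}$ ($1\le l\le n$), $\mathbf G_{2l}=\mathbf G(r,1,l)\oplus\mathbf G(r,1,1)\oplus\{I_{n-l-1}\}$ ($1\le l\le n-1$). Coset leaders: $\operatorname{CL}(\mathbf G_1/\mathbf G_0)=\{I,a_1,\dots,a_1^{r-1}\}$, $\operatorname{CL}(\mathbf G_{2l}/\mathbf G_{2l-1})=\{I,a_{l+1},\dots,a_{l+1}^{r-1}\}$, $\operatorname{CL}(\mathbf G_{2l+1}/\mathbf G_{2l})=\{I,b_l,b_{l-1}b_l,\dots,b_1b_2\cdots b_l\}$. Initial vector $\mathbf x_0=(u_1,\dots,u_n)$ with real $0<u_1<\cdots<u_n$, $\|\mathbf x_0\|=1$ (standard Hermitian inner product). $S=\operatorname{Stab}_{\mathbf G}(\mathbf x_0)$. Decoding region of $g$: $\operatorname{DR}(g)=\{\mathbf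 x:\|g\mathbf x-\mathbf x_0\|<\|a\mathbf x-\mathbf x_0\|\ \forall a\notin Sg\}$. Subgroup decoding algorithm: $\mathbf r_0=\mathbf r$; for $k=1,\dots,2n-1$ choose $d_k\in\operatorname{CL}(\mathbf G_k/\mathbf G_{k-1})$ minimizing $\|a\mathbf r_{k-1}-\mathbf x_0\|$ (ties broken by a fixed ordering), $\mathbf r_k=d_k\mathbf r_{k-1}$; output $d_{2n-1}\cdots d_1$, regarded as decoding to $g$ when it lies in $Sg$. *)

(* Defs.v *)
(* Complex numbers are modelled by an arbitrary
   numClosedFieldType C (e.g. algC, or complex R for R : realType). *)
From HB Require Import structures.
From mathcomp Require Import all_boot all_order all_algebra.
Set Implicit Arguments. Unset Strict Implicit. Unset Printing Implicit Defensive.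
Import Order.TTheory GRing.Theory Num.Theory.
Local Open Scope ring_scope.

Section GR1n.
Variables (C : numClosedFieldType) (n : nat).
Local Notation M := 'M[C]_n.
Local Notation V := 'cV[C]_n.

Definition hnorm (v : V) : C := sqrtC (\sum_i v i 0 * (v i 0)^*).

(* G(r,1,n): monomial matrices whose nonzero entries are r-th roots of unity. *)
Definition inG (r : nat) (A : M) : bool :=
  [forall i, #|[set j | A i j != 0]| == 1%N] &&
  [forall j, #|[set i | A i j != 0]| == 1%N] &&
  [forall i, forall j, (A i j != 0) ==> (A i j ^+ r == 1)].

Definition inStab (r : nat) (x0 : V) (s : M) : Prop := inG r s /\ s *m x0 = x0.
Definition inSg (r : nat) (x0 : V) (g a : M) : Prop :=
  exists s, inStab r x0 s /\ a = s *m g.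

Definition inDR (r : nat) (x0 : V) (g : M) (x : V) : Prop :=
  forall a : M, inG r a -> ~ inSg r x0 g a ->
    hnorm (g *m x - x0) < hnorm (a *m x - x0).

(* Generators, with 1-based indices as in the paper:
   a_i (1 <= i <= n) multiplies coordinate i by xi;
   b_j (1 <= j < n) swaps coordinates j and j+1. *)
Definition gen_a (xi : C) (i : nat) : M :=
  \matrix_(p, q) (if p == q then (if (p.+1 == i)%N then xi else 1) else 0).

Definition swap_nat (j p : nat) : nat :=
  if (p.+1 == j)%N then j else if (p == j)%N then j.-1 else p.

Definition gen_b (j : nat) : M :=
  \matrix_(p, q) ((nat_of_ord q == swap_nat j p)%:R : C).

(* Coset leaders of G_k / G_{k-1}, k = 1, ..., 2n-1:
   k = 1 or k = 2l : {I, a_{l+1}, ..., a_{l+1}^(r-1)}   (l = k/2)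
   k = 2l+1, l>=1  : {I, b_l, b_{l-1} b_l, ..., b_1 b_2 ... b_l}. *)
Definition CL_a (xi : C) (r i : nat) : seq M :=
  [seq iter e (mulmx (gen_a xi i)) 1%:M | e <- iota 0 r].

Definition CL_b (l : nat) : seq M :=
  [seq foldr (fun j P => gen_b j *m P) 1%:M (iota (l - m).+1 m) | m <- iota 0 l.+1].

Definition CL (xi : C) (r k : nat) : seq M :=
  if odd k && (1 < k)%N then CL_b k./2 else CL_a xi r (k./2).+1.

(* A run of the subgroup decoding algorithm is a choice d_1, d_2, ... of
   coset leaders, each minimizing the distance at its step (ties may be
   broken arbitrarily). r_k = d_k r_{k-1}; output d_k ... d_1. *)
Fixpoint resid (d : nat -> M) (y : V) (k : nat) : V :=
  if k is k'.+1 then d k'.+1 *m resid d y k' else y.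

Fixpoint outp (d : nat -> M) (k : nat) : M :=
  if k is k'.+1 then d k'.+1 *m outp d k' else 1%:M.

Definition is_run (xi : C) (r : nat) (x0 y : V) (d : nat -> M) : Prop :=
  forall k, (1 <= k <= (2 * n).-1)%N ->
    d k \in CL xi r k /\
    forall a, a \in CL xi r k ->
      hnorm (d k *m resid d y k.-1 - x0) <= hnorm (a *m resid d y k.-1 - x0).

End GR1n.

(* Main.v *)
Require Import Defs.
From HB Require Import structures.
From mathcomp Require Import all_boot all_order all_algebra all_fingroup.
From mathcomp Require Import ring lra zify.
From Stdlib Require Import Classical FunctionalExtensionality.
Set Implicit Arguments. Unset Strict Implicit. Unset Printing Implicit Defensive.
Import Order.TTheory GRing.Theory Num.Theory.
Local Open Scope ring_scope.

Section Mono.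
Variables (C : numClosedFieldType) (n : nat).
Implicit Types (s t : 'S_n) (c e : 'I_n -> C) (u v : 'cV[C]_n).

Definition mono s c : 'M[C]_n := \matrix_(i, j) ((j == s i)%:R * c i).

Lemma mono_mulv s c v : mono s c *m v = \col_i (c i * v (s i) 0).
Proof.
apply/matrixP => i k; rewrite !mxE (bigD1 (s i)) //= big1 ?addr0.
  by rewrite mxE eqxx mul1r (ord1 k).
by move=> j /negPf hj; rewrite mxE hj mul0r mul0r.
Qed.

Lemma mono_mul s c t e :
  mono s c *m mono t e = mono (s * t)%g (fun i => c i * e (s i)).
Proof.
apply/matrixP => i k; rewrite !mxE (bigD1 (s i)) //= big1 ?addr0.
  rewrite !mxE eqxx mul1r permM.
  by case: (k == t (s i)); rewrite ?mul1r ?mul0r ?mulr0.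
by move=> j /negPf hj; rewrite mxE hj mul0r mul0r.
Qed.

Lemma mono1 : mono 1%g (fun _ => 1) = 1%:M.
Proof. by apply/matrixP => i j; rewrite !mxE perm1 mulr1 eq_sym. Qed.

Variable r : nat.
Hypothesis r_gt0 : (0 < r)%N.

Lemma root_norm (x : C) : x ^+ r = 1 -> `|x| = 1.
Proof.
move=> h; apply/eqP; rewrite -(pexpr_eq1 r_gt0) ?normr_ge0 //.
by rewrite -normrX h normr1.
Qed.

Lemma root_ne0 (x : C) : x ^+ r = 1 -> x != 0.
Proof. by move=> /root_norm h; apply/eqP => x0; rewrite x0 normr0 in h; move/eqP: h; rewrite eq_sym oner_eq0. Qed.

Lemma root_conj (x : C) : x ^+ r = 1 -> x * x^* = 1.
Proof. by move=> h; rewrite -normCK root_norm // expr1n. Qed.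

Lemma inG_mono s c : (forall i, c i ^+ r = 1) -> inG r (mono s c).
Proof.
move=> hc; apply/andP; split; [apply/andP; split|].
- apply/forallP => i; apply/cards1P; exists (s i); apply/setP => j.
  rewrite !inE mxE; case: (j == s i); rewrite ?mul1r ?mul0r ?eqxx //.
  exact: root_ne0.
- apply/forallP => j; apply/cards1P; exists (s^-1 j)%g; apply/setP => i.
  rewrite !inE mxE; case: (eqVneq j (s i)) => [->|hne].
    by rewrite mul1r permK eqxx root_ne0.
  rewrite mul0r eqxx /=; apply/esym/eqP => ei; move/eqP: hne; apply; by rewrite ei permKV.
- apply/forallP => i; apply/forallP => j; apply/implyP.
  rewrite mxE; case: (j == s i); rewrite ?mul1r ?mul0r ?eqxx // => _; exact/eqP/hc.
Qed.

Lemma mono_of_inG A : inG r A ->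
  exists s c, (forall i, c i ^+ r = 1) /\ A = mono s c.
Proof.
case/andP => /andP [/forallP hrow /forallP hcol] /forallP hent.
have hf i : exists j, [set j' | A i j' != 0] == [set j].
  by have /cards1P [j hj] := hrow i; exists j; apply/eqP.
pose f i := xchoose (hf i).
have hfE i : [set j' | A i j' != 0] = [set f i] := eqP (xchooseP (hf i)).
have hAf i j : (A i j != 0) = (j == f i).
  by move: (hfE i) => /setP /(_ j); rewrite !inE.
have finj : injective f.
  move=> i i' e.
  have /cards1P [k hk] := hcol (f i).
  have h1 : i \in [set i0 | A i0 (f i) != 0] by rewrite inE hAf.
  have h2 : i' \in [set i0 | A i0 (f i) != 0] by rewrite inE hAf e.
  by move: h1 h2; rewrite hk !inE => /eqP -> /eqP ->.
exists (perm finj), (fun i => A i (f i)); split.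
  move=> i; have := forallP (hent i) (f i); rewrite hAf eqxx /=.
  by move/eqP.
apply/matrixP => i j; rewrite mxE permE; case: (eqVneq j (f i)) => [->|hne].
  by rewrite mul1r.
rewrite mul0r; have := hAf i j; rewrite (negbTE hne).
by move/negbT; rewrite negbK => /eqP.
Qed.

Lemma mono_inv s c : (forall i, c i ^+ r = 1) ->
  mono s^-1%g (fun i => (c (s^-1 i)%g)^-1) *m mono s c = 1%:M.
Proof.
move=> hc; rewrite mono_mul mulVg -mono1; congr mono; apply: FunctionalExtensionality.functional_extensionality => i.
by rewrite mulVf // root_ne0.
Qed.

End Mono.
Section Rearr.
Variables (C : numClosedFieldType) (n : nat).

Lemma sum_diff2 (F G : 'I_n -> C) j k : j != k ->
  (forall i, i != j -> i != k -> F i = G i) ->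
  \sum_i F i = \sum_i G i + (F j - G j) + (F k - G k).
Proof.
move=> jk h; rewrite [\sum_i G i](bigD1 j) //= [\sum_(i | i != j) G i](bigD1 k) /=; last by rewrite eq_sym.
rewrite [\sum_i F i](bigD1 j) //= [\sum_(i | i != j) F i](bigD1 k) /=; last by rewrite eq_sym.
rewrite (eq_bigr G); last by move=> i /andP [hij hik]; apply: h.
ring.
Qed.

Lemma rearr (a b : 'I_n -> C) :
  (forall i j : 'I_n, (i <= j)%N -> a i <= a j) ->
  (forall i j : 'I_n, (i <= j)%N -> b i <= b j) ->
  forall s : 'S_n, \sum_i a i * b (s i) <= \sum_i a i * b i.
Proof.
move=> ha hb.
suff H : forall k, (k <= n)%N -> forall s : 'S_n,
    (forall i : 'I_n, (k <= i)%N -> s i = i) ->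
    \sum_i a i * b (s i) <= \sum_i a i * b i.
  move=> s; apply: (H n) => // i; by rewrite leqNgt ltn_ord.
elim=> [_ s hs|k IH hk s hs].
  by rewrite le_eqVlt; apply/orP; left; apply/eqP; apply: eq_bigr => i _; rewrite hs.
pose K := Ordinal hk.
case: (eqVneq (s K) K) => hsK.
  apply: (IH (ltnW hk) s) => i; rewrite leq_eqVlt => /orP [/eqP ki|ki].
    by have -> : i = K by apply/val_inj. 
  exact: hs.
pose j := (s^-1 K)%g.
have sj : s j = K by rewrite permKV.
have jK : j != K by apply/eqP => e; move: hsK; rewrite -{1}e sj eqxx.
have jk : (j < k)%N.
  rewrite ltnNge; apply/negP => hkj.
  move: hkj; rewrite leq_eqVlt => /orP [/eqP e|e].
    by move/eqP: jK; apply; apply/val_inj.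
  by move/eqP: jK; apply; rewrite -sj hs.
pose m := s K.
have mK : m != K by [].
have mk : (m < k)%N.
  rewrite ltnNge; apply/negP => hkm.
  move: hkm; rewrite leq_eqVlt => /orP [/eqP e|e].
    by move/eqP: mK; apply; apply/val_inj.
  have : s m = s K by rewrite hs.
  by move/perm_inj => e'; move/eqP: mK; apply.
pose s' := (tperm j K * s)%g.
have hs' : forall i : 'I_n, (k <= i)%N -> s' i = i.
  move=> i; rewrite leq_eqVlt => /orP [/eqP ki|ki].
    have -> : i = K by apply/val_inj.
    by rewrite permM tpermR.
  rewrite permM tpermD ?hs //.
  - by apply/eqP => e; move: jk; rewrite e ltnNge (ltnW ki).
  - by apply/eqP => e; move: ki; rewrite -e ltnn.
apply: le_trans (IH (ltnW hk) s' hs').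
rewrite (@sum_diff2 (fun i => a i * b (s' i)) (fun i => a i * b (s i)) j K jK); last first.
  by move=> i ij iK; rewrite permM tpermD // eq_sym.
rewrite !permM tpermL tpermR sj -/m -addrA lerDl.
have -> : a j * b m - a j * b K + (a K * b K - a K * b m) = (a K - a j) * (b K - b m) by ring.
by apply: mulr_ge0; rewrite subr_ge0; [apply: ha; apply: ltnW | apply: hb; apply: ltnW].
Qed.
End Rearr.

Section Score.
Variables (C : numClosedFieldType) (n r : nat) (x0 : 'cV[C]_n).
Hypothesis r_gt0 : (0 < r)%N.
Hypothesis x0_pos : forall i, 0 < x0 i 0.

Definition Nm (v : 'cV[C]_n) := \sum_i v i 0 * (v i 0)^*.
Definition T (z : C) := z + z^*.
Definition score (v : 'cV[C]_n) := \sum_i x0 i 0 * T (v i 0).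

Lemma Nm_ge0 v : 0 <= Nm v.
Proof. by apply: sumr_ge0 => i _; exact: mul_conjC_ge0. Qed.

Lemma hnorm_leE u v : (hnorm u <= hnorm v) = (Nm u <= Nm v).
Proof. by apply: ler_sqrtC; rewrite nnegrE Nm_ge0. Qed.

Lemma hnorm_ltE u v : (hnorm u < hnorm v) = (Nm u < Nm v).
Proof. by apply: ltr_sqrtC; rewrite nnegrE Nm_ge0. Qed.

Lemma Nm_sub v : Nm (v - x0) = Nm v - score v + Nm x0.
Proof.
rewrite /Nm /score -sumrB -big_split /=; apply: eq_bigr => i _.
rewrite !mxE rmorphB /= (geC0_conj (ltW (x0_pos i))) /T; ring.
Qed.

Lemma Nm_mono s c v : (forall i, c i ^+ r = 1) -> Nm (mono s c *m v) = Nm v.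
Proof.
move=> hc; rewrite mono_mulv /Nm.
rewrite [RHS](reindex_inj (can_inj (permK s))) /=.
apply: eq_bigr => i _; rewrite mxE rmorphM /=.
have := root_conj r_gt0 (hc i); move=> h.
transitivity ((c i * (c i)^*) * (v (s i) 0 * (v (s i) 0)^*)); first ring.
by rewrite h mul1r.
Qed.

Lemma mono_cmp s c t e u : (forall i, c i ^+ r = 1) -> (forall i, e i ^+ r = 1) ->
  (hnorm (mono s c *m u - x0) <= hnorm (mono t e *m u - x0)) =
  (score (mono t e *m u) <= score (mono s c *m u)).
Proof.
move=> hc he; rewrite hnorm_leE !Nm_sub !Nm_mono // lerD2r lerD2l lerN2 //.
Qed.

Lemma mono_cmp_lt s c t e u : (forall i, c i ^+ r = 1) -> (forall i, e i ^+ r = 1) ->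
  (hnorm (mono s c *m u - x0) < hnorm (mono t e *m u - x0)) =
  (score (mono t e *m u) < score (mono s c *m u)).
Proof.
move=> hc he; rewrite hnorm_ltE !Nm_sub !Nm_mono // ltrD2r ltrD2l ltrN2 //.
Qed.

End Score.

Definition sec (C : numClosedFieldType) (r : nat) (z : C) :=
  forall c : C, c ^+ r = 1 -> T (c * z) <= T z.

Lemma opt_normalized (C : numClosedFieldType) (n r : nat) (x0 : 'cV[C]_n)
  (x0_pos : forall i, 0 < x0 i 0)
  (x0_inc : forall i j : 'I_n, (i <= j)%N -> x0 i 0 <= x0 j 0)
  (w : 'cV[C]_n) :
  (forall i, sec r (w i 0)) ->
  (forall i j : 'I_n, (i <= j)%N -> T (w i 0) <= T (w j 0)) ->
  forall s c, (forall i, c i ^+ r = 1) ->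
  score x0 (mono s c *m w) <= score x0 w.
Proof.
move=> hsec hsort s c hc; rewrite /score mono_mulv.
apply: (@le_trans _ _ (\sum_i x0 i 0 * T (w (s i) 0))).
  apply: ler_sum => i _; rewrite mxE.
  by apply: ler_wpM2l; [exact: ltW | exact: hsec].
exact: (@rearr C n (fun i => x0 i 0) (fun i => T (w i 0))).
Qed.

Section Leaders.
Variables (C : numClosedFieldType) (N : nat).
Local Notation n := N.+1.

Lemma gen_aE (xi : C) i :
  gen_a n xi i = mono 1%g (fun p : 'I_n => if (p.+1 == i)%N then xi else 1).
Proof.
apply/matrixP => p q; rewrite !mxE perm1 eq_sym.
by case: (q == p); rewrite ?mul1r ?mul0r.
Qed.

Lemma CLa_elt (xi : C) i e :
  iter e (mulmx (gen_a n xi i)) 1%:M =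
  mono 1%g (fun p : 'I_n => if (p.+1 == i)%N then xi ^+ e else 1).
Proof.
elim: e => [|e IH] /=.
  rewrite -mono1; congr mono; apply: functional_extensionality => p.
  by case: ifP; rewrite ?expr0.
rewrite IH gen_aE mono_mul mulg1; congr mono; apply: functional_extensionality => p.
by rewrite perm1; case: ifP; rewrite ?mulr1 ?exprS.
Qed.

Definition tb (j : nat) : 'S_n := tperm (inord j.-1) (inord j).

Lemma tb_val j (p : 'I_n) : (0 < j <= N)%N -> (tb j p : nat) = swap_nat j p.
Proof.
move=> /andP [j0 jN]; rewrite /tb /swap_nat.
case: (eqVneq p (inord j.-1)) => [->|h1].
  rewrite tpermL !inordK; try lia.
  by have -> : (j.-1.+1 == j) = true by lia.
case: (eqVneq p (inord j)) => [->|h2].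
  rewrite tpermR !inordK; try lia.
  have -> : (j.+1 == j) = false by lia.
  by rewrite eqxx.
rewrite tpermD; [|by rewrite eq_sym|by rewrite eq_sym].
have -> : (p.+1 == j) = false.
  apply/negP => /eqP e; move/eqP: h1; apply; apply/val_inj; rewrite /= inordK; lia.
have -> : (nat_of_ord p == j) = false.
  apply/negP => /eqP e; move/eqP: h2; apply; apply/val_inj; rewrite /= inordK; lia.
by [].
Qed.

Lemma gen_bE j : (0 < j <= N)%N -> gen_b C n j = mono (tb j) (fun _ => 1).
Proof.
by move=> hj; apply/matrixP => p q; rewrite !mxE mulr1 -tb_val.
Qed.

Lemma CLb_mono (js : seq nat) : all (fun j => (0 < j <= N)%N) js ->
  exists s, foldr (fun j P => gen_b C n j *m P) 1%:M js = mono s (fun _ => 1).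
Proof.
elim: js => [|j js IH] /=.
  by move=> _; exists 1%g; rewrite mono1.
case/andP => hj /IH [s ->]; exists (tb j * s)%g.
rewrite gen_bE // mono_mul; congr mono; apply: functional_extensionality => p.
by rewrite mulr1.
Qed.

Definition insidx (p L i : nat) : nat :=
  if i == p then L else if ((p < i) && (i <= L))%N then i.-1 else i.

Lemma insidx_swap p L i : (0 < p <= L)%N ->
  insidx p L (swap_nat p i) = insidx p.-1 L i.
Proof.
move=> hp; rewrite /insidx /swap_nat.
repeat case: ifP; lia.
Qed.

Definition ins (p L : nat) (u : 'cV[C]_n) : 'cV[C]_n :=
  \col_(i < n) u (inord (insidx p L i)) 0.

Lemma CLb_act L m (u : 'cV[C]_n) : (m <= L <= N)%N ->
  foldr (fun j P => gen_b C n j *m P) 1%:M (iota (L - m).+1 m) *m u = ins (L - m) L u.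
Proof.
elim: m => [|m IH] hm /=.
  rewrite mul1mx subn0; apply/matrixP => i k; rewrite mxE (ord1 k).
  rewrite /insidx; case: ifP => [/eqP <-|_]; first by rewrite inord_val.
  case: ifP => [/andP [h1 h2]|_]; first lia.
  by rewrite inord_val.
have -> : ((L - m.+1).+1 = L - m)%N by lia.
rewrite -mulmxA IH; last by lia.
rewrite gen_bE; last by lia.
apply/matrixP => i k; rewrite mono_mulv !mxE mul1r tb_val; last by lia.
rewrite insidx_swap; last by lia.
by have -> : ((L - m).-1 = L - m.+1)%N by lia.
Qed.

End Leaders.

Section Algo.
Variables (C : numClosedFieldType) (N r : nat) (xi : C) (x0 y : 'cV[C]_N.+1)
  (d : nat -> 'M[C]_N.+1).
Local Notation n := N.+1.
Hypothesis r_gt0 : (0 < r)%N.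
Hypothesis hxi : r.-primitive_root xi.
Hypothesis x0_pos : forall i, 0 < x0 i 0.
Hypothesis x0_inc : forall i j : 'I_n, (i < j)%N -> x0 i 0 < x0 j 0.
Hypothesis hrun : is_run xi r x0 y d.

Lemma score_diff1 (v v' : 'cV[C]_n) i0 :
  (forall p, p != i0 -> v p 0 = v' p 0) ->
  (score x0 v <= score x0 v') = (T (v i0 0) <= T (v' i0 0)).
Proof.
move=> h; rewrite /score (bigD1 i0) //= [X in _ <= X](bigD1 i0) //=.
rewrite (eq_bigr (fun i => x0 i 0 * T (v' i 0))); last by move=> i /h ->.
by rewrite lerD2r ler_pM2l.
Qed.

Lemma score_swap (v v' : 'cV[C]_n) j k : j != k ->
  (forall i, i != j -> i != k -> v i 0 = v' i 0) ->
  v j 0 = v' k 0 -> v k 0 = v' j 0 ->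
  score x0 v = score x0 v' + (x0 k 0 - x0 j 0) * (T (v k 0) - T (v j 0)).
Proof.
move=> jk h hj hk; rewrite /score.
rewrite (@sum_diff2 C n (fun i => x0 i 0 * T (v i 0)) (fun i => x0 i 0 * T (v' i 0)) j k jk);
  last by move=> i ij ik; rewrite h.
rewrite -addrA; congr (_ + _); rewrite -hk hj /T; ring.
Qed.

Lemma two_n : ((2 * n).-1 = N.*2.+1)%N.
Proof. by rewrite mul2n doubleS. Qed.

Lemma xi_root : xi ^+ r = 1.
Proof. exact: prim_expr_order. Qed.

Lemma CL_mono k a : (1 <= k <= (2 * n).-1)%N -> a \in CL n xi r k ->
  exists s c, (forall i, c i ^+ r = 1) /\ a = mono s c.
Proof.
rewrite two_n => /andP [k1 kN]; rewrite /CL; case: ifP => _.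
  have hl : (k./2 <= N)%N.
    apply: (leq_trans (half_leq kN)).
    by have -> : ((N.*2.+1)./2 = uphalf N.*2)%N by []; rewrite uphalf_double.
  case/mapP => m; rewrite mem_iota => hm ->.
  have hall : all (fun j => (0 < j <= N)%N) (iota (k./2 - m).+1 m).
    apply/allP => j; rewrite mem_iota => hj; lia.
  have [s ->] := @CLb_mono C N (iota (k./2 - m).+1 m) hall.
  by exists s, (fun _ => 1); split => [i|//]; rewrite expr1n.
case/mapP => e _ ->; rewrite CLa_elt.
eexists; eexists; split; last reflexivity.
move=> i /=; case: ifP => _; last by rewrite expr1n.
by rewrite exprAC xi_root expr1n.
Qed.

Lemma resid_S k : resid d y k.+1 = d k.+1 *m resid d y k.
Proof. by []. Qed.

Lemma run_opt k a : (1 <= k <= (2 * n).-1)%N -> a \in CL n xi r k ->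
  score x0 (a *m resid d y k.-1) <= score x0 (d k *m resid d y k.-1).
Proof.
move=> hk ha; have [hmem hopt] := hrun hk.
have := hopt a ha.
have [s [c [hc ->]]] := CL_mono hk hmem.
have [t [e [he ->]]] := CL_mono hk ha.
by rewrite (mono_cmp r_gt0 x0_pos).
Qed.

Lemma run_mono k : (1 <= k <= (2 * n).-1)%N ->
  exists s c, (forall i, c i ^+ r = 1) /\ d k = mono s c.
Proof. move=> hk; have [hmem _] := hrun hk; exact: CL_mono hk hmem. Qed.

Lemma outp_mono k : (k <= (2 * n).-1)%N ->
  exists s c, (forall i, c i ^+ r = 1) /\ outp d k = mono s c.
Proof.
elim: k => [|k IH] hk /=.
  by exists 1%g, (fun _ => 1); split => [i|]; rewrite ?expr1n ?mono1.
have [s [c [hc ->]]] := IH (ltnW hk).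
have [t [e [he ->]]] := run_mono (k := k.+1) (ltac:(by rewrite hk)).
rewrite mono_mul; eexists; eexists; split; last reflexivity.
by move=> i /=; rewrite exprMn he hc mulr1.
Qed.

Lemma outp_resid k : outp d k *m y = resid d y k.
Proof. by elim: k => [|k IH] /=; rewrite ?mul1mx // -mulmxA IH. Qed.



Lemma CLa_act i e (u : 'cV[C]_n) (p : 'I_n) :
  (iter e (mulmx (gen_a n xi i.+1)) 1%:M *m u) p 0 =
  (if (p : nat) == i then xi ^+ e else 1) * u p 0.
Proof. by rewrite CLa_elt mono_mulv mxE perm1 eqSS. Qed.

Lemma resid_k k : (1 <= k)%N -> resid d y k = d k *m resid d y k.-1.
Proof. by case: k. Qed.

Lemma rot_step k i : (1 <= k <= (2 * n).-1)%N -> (i <= N)%N ->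
  CL n xi r k = CL_a n xi r i.+1 ->
  (forall p : 'I_n, (p : nat) != i -> resid d y k p 0 = resid d y k.-1 p 0) /\
  sec r (resid d y k (inord i) 0).
Proof.
move=> hk hi hCL; have [hmem _] := hrun hk.
have k1 : (1 <= k)%N by case/andP: hk.
move: (hmem); rewrite hCL => /mapP [e he hde].
rewrite (resid_k k1) hde.
set u := resid d y k.-1.
split => [p hp|c hc]; first by rewrite CLa_act (negbTE hp) mul1r.
have [f ->] := prim_rootP hxi hc.
pose e' := ((f + e) %% r)%N.
have ha : iter e' (mulmx (gen_a n xi i.+1)) 1%:M \in CL n xi r k.
  rewrite hCL; apply/mapP; exists e' => //; rewrite mem_iota add0n ltn_pmod //.
have := run_opt hk ha; rewrite hde.
rewrite (score_diff1 (i0 := inord i)); last first.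
  move=> p hp; rewrite !CLa_act.
  have -> : ((p : nat) == i) = false.
    apply/negP => /eqP e0; move/eqP: hp; apply; apply/val_inj; rewrite /= inordK //; lia.
  by [].
rewrite !CLa_act inordK; last by lia.
by rewrite eqxx /e' prim_expr_mod // exprD mulrA.
Qed.

Lemma ins_val p L (u : 'cV[C]_n) t : (t <= N)%N ->
  ins p L u (inord t) 0 = u (inord (insidx p L t)) 0.
Proof. by move=> ht; rewrite mxE inordK. Qed.

Lemma swap_ins p L (u : 'cV[C]_n) : (p.+1 <= L <= N)%N ->
  score x0 (ins p.+1 L u) = score x0 (ins p L u) +
   (x0 (inord p.+1) 0 - x0 (inord p) 0) * (T (u (inord L) 0) - T (u (inord p) 0)).
Proof.
move=> hp.
have hj : (inord p : 'I_n) != inord p.+1.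
  apply/negP => /eqP /(congr1 val); rewrite /= !inordK; lia.
have hins t : (t <= N)%N -> forall q, ins q L u (inord t) 0 = u (inord (insidx q L t)) 0.
  by move=> ht q; rewrite ins_val.
rewrite (@score_swap (ins p.+1 L u) (ins p L u) _ _ hj).
- rewrite !hins; try lia.
  have -> : insidx p.+1 L p.+1 = L by rewrite /insidx eqxx.
  have -> : insidx p.+1 L p = p by rewrite /insidx; repeat case: ifP; lia.
  by [].
- move=> i hi1 hi2; rewrite !mxE; congr (u (inord _) 0); rewrite /insidx.
  have h1 : (i : nat) != p by apply/negP => /eqP e0; move/eqP: hi1; apply; apply/val_inj; rewrite /= inordK; lia.
  have h2 : (i : nat) != p.+1 by apply/negP => /eqP e0; move/eqP: hi2; apply; apply/val_inj; rewrite /= inordK; lia.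
  repeat case: ifP; lia.
- rewrite !hins; try lia; congr (u (inord _) 0); rewrite /insidx; repeat case: ifP; lia.
- rewrite !hins; try lia; congr (u (inord _) 0); rewrite /insidx; repeat case: ifP; lia.
Qed.

Lemma x0_lt (p : nat) : (p < N)%N -> 0 < x0 (inord p.+1) 0 - x0 (inord p) 0.
Proof. by move=> hp; rewrite subr_gt0; apply: x0_inc; rewrite !inordK //; lia. Qed.

Lemma ins_step L : (1 <= L <= N)%N ->
  (forall t, (t <= L)%N -> sec r (resid d y L.*2 (inord t) 0)) ->
  (forall t, (t.+2 <= L)%N ->
     T (resid d y L.*2 (inord t) 0) <= T (resid d y L.*2 (inord t.+1) 0)) ->
  (forall t, (t <= L)%N -> sec r (resid d y L.*2.+1 (inord t) 0)) /\
  (forall t, (t.+1 <= L)%N ->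
     T (resid d y L.*2.+1 (inord t) 0) <= T (resid d y L.*2.+1 (inord t.+1) 0)).
Proof.
move=> hL hsec hsort.
have hk : (1 <= L.*2.+1 <= (2 * n).-1)%N by rewrite two_n; lia.
have hCL : CL n xi r L.*2.+1 = CL_b C n L.
  rewrite /CL /= odd_double /=.
  have -> : (1 < L.*2.+1)%N by lia.
  by rewrite uphalf_double.
have [hmem _] := hrun hk.
move: hmem; rewrite hCL => /mapP [m]; rewrite mem_iota add0n ltnS => hm hdk.
set u := resid d y L.*2.
have hw : resid d y L.*2.+1 = ins (L - m) L u.
  by rewrite resid_S hdk CLb_act //; lia.
have hopt m' : (m' <= L)%N -> score x0 (ins (L - m') L u) <= score x0 (ins (L - m) L u).
  move=> hm'.
  have ha : foldr (fun j P => gen_b C n j *m P) 1%:M (iota (L - m').+1 m') \in CL n xi r L.*2.+1.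
    by rewrite hCL; apply/mapP; exists m' => //; rewrite mem_iota add0n ltnS.
  have := run_opt hk ha; rewrite /= hdk !CLb_act //; lia.
set p := (L - m)%N.
have ha : (p < L)%N -> T (u (inord L) 0) <= T (u (inord p) 0).
  move=> hp; have := hopt m.-1 (ltac:(lia)).
  have -> : (L - m.-1 = p.+1)%N by rewrite /p; lia.
  rewrite swap_ins; last by lia.
  by rewrite gerDl pmulr_rle0 ?subr_le0 // x0_lt //; lia.
have hb : (0 < p)%N -> T (u (inord p.-1) 0) <= T (u (inord L) 0).
  move=> hp; have := hopt m.+1 (ltac:(lia)).
  have -> : (L - m.+1 = p.-1)%N by rewrite /p; lia.
  have e1 : p = p.-1.+1 by lia.
  rewrite -/p [X in _ <= score x0 (ins X L u) -> _]e1 swap_ins; last by lia.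
  rewrite lerDl pmulr_rge0 ?subr_ge0 // -e1.
  have := x0_lt (p := p.-1) (ltac:(lia)); by rewrite -e1.
split.
  move=> t ht; rewrite hw ins_val; last by lia.
  by apply: hsec; rewrite /insidx; repeat case: ifP; lia.
move=> t ht; rewrite hw !ins_val; try lia.
case: (ltngtP t.+1 p) => h.
- have -> : insidx p L t = t by rewrite /insidx; repeat case: ifP; lia.
  have -> : insidx p L t.+1 = t.+1 by rewrite /insidx; repeat case: ifP; lia.
  by apply: hsort; lia.
- case: (eqVneq t p) => ht'.
    have -> : insidx p L t = L by rewrite /insidx; repeat case: ifP; lia.
    have -> : insidx p L t.+1 = p by rewrite /insidx; repeat case: ifP; lia.
    by apply: ha; lia.
  have -> : insidx p L t = t.-1 by rewrite /insidx; repeat case: ifP; lia.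
  have -> : insidx p L t.+1 = t by rewrite /insidx; repeat case: ifP; lia.
  have := hsort t.-1 (ltac:(lia)); by have -> : t.-1.+1 = t by lia.
- have -> : insidx p L t = p.-1 by rewrite /insidx; repeat case: ifP; lia.
  have -> : insidx p L t.+1 = L by rewrite /insidx; repeat case: ifP; lia.
  by apply: hb; lia.
Qed.

Lemma inv L : (L <= N)%N ->
  (forall t, (t <= L)%N -> sec r (resid d y L.*2.+1 (inord t) 0)) /\
  (forall t, (t.+1 <= L)%N ->
     T (resid d y L.*2.+1 (inord t) 0) <= T (resid d y L.*2.+1 (inord t.+1) 0)).
Proof.
elim: L => [_|L IH hL].
  have hk : (1 <= 1 <= (2 * n).-1)%N by rewrite two_n.
  have [_ hs] := rot_step hk (leq0n N) (erefl _).
  by split => [t|t //]; rewrite leqn0 => /eqP ->.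
have [hsec hsort] := IH (ltnW hL).
have hk : (1 <= L.*2.+2 <= (2 * n).-1)%N by rewrite two_n; lia.
have hCL : CL n xi r L.*2.+2 = CL_a n xi r L.+2.
  by rewrite /CL /= odd_double /= doubleK.
have [hun hs2] := rot_step hk hL hCL.
have -> : (L.+1.*2.+1 = L.*2.+3)%N by rewrite doubleS.
apply: (ins_step (L := L.+1)); first by lia.
- move=> t ht; rewrite doubleS.
  case: (eqVneq t L.+1) => [->//|htL].
  rewrite hun /=; first by apply: hsec; lia.
  by rewrite inordK //; lia.
- move=> t ht; rewrite doubleS !hun /=; first by apply: hsort; lia.
  all: by rewrite inordK //; lia.
Qed.

End Algo.

Lemma sorted_pairwise (C : numClosedFieldType) N (w : 'cV[C]_N.+1) :
  (forall t, (t.+1 <= N)%N -> T (w (inord t) 0) <= T (w (inord t.+1) 0)) ->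
  forall i j : 'I_N.+1, (i <= j)%N -> T (w i 0) <= T (w j 0).
Proof.
move=> h.
have H : forall b a, (a + b <= N)%N -> T (w (inord a) 0) <= T (w (inord (a + b)) 0).
  elim=> [|b IH] a hab; first by rewrite addn0.
  apply: (le_trans (IH a (ltac:(lia)))).
  have -> : (a + b.+1 = (a + b).+1)%N by lia.
  by apply: h; lia.
move=> i j hij; have jN := ltn_ord j.
have := H (j - i)%N i (ltac:(lia)).
have -> : (i + (j - i) = j)%N by lia.
by rewrite !inord_val.
Qed.

Theorem mainTheorem16 (C : numClosedFieldType) (n r : nat) (xi : C)
    (x0 : 'cV[C]_n) :
  (1 <= n)%N -> (1 <= r)%N -> r.-primitive_root xi ->
  (forall i, 0 < x0 i 0) ->
  (forall i j : 'I_n, (i < j)%N -> x0 i 0 < x0 j 0) ->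
  hnorm x0 = 1 ->
  forall (g : 'M[C]_n), inG r g ->
  forall (y : 'cV[C]_n), inDR r x0 g y ->
  forall (d : nat -> 'M[C]_n), is_run xi r x0 y d ->
  inSg r x0 g (outp d (2 * n).-1).
Proof.
case: n x0 => [|N] x0 hn //.
move=> hr hxi hx0 hinc _ g hg y hDR d hrun.
have [hsecw hsortw] := inv hr hxi hx0 hinc hrun (leqnn N).
set w := resid d y N.*2.+1.
have hsec : forall i, sec r (w i 0).
  by move=> i; rewrite -(inord_val i); apply: hsecw; rewrite -ltnS.
have hsort := sorted_pairwise hsortw.
have hx0w : forall i j : 'I_N.+1, (i <= j)%N -> x0 i 0 <= x0 j 0.
  move=> i j; rewrite leq_eqVlt => /orP [/eqP e|e].
    by have -> : i = j by apply/val_inj.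
  by apply: ltW; apply: hinc.
have [tau [e [he hD]]] := outp_mono hr hxi hrun (leqnn _).
have hw : mono tau e *m y = w by rewrite -hD outp_resid two_n.
have [sg [c [hc hgE]]] := mono_of_inG hg.
apply: NNPP => hnot.
have := hDR _ (inG_mono hr tau he) ltac:(by rewrite -hD).
rewrite hgE (mono_cmp_lt hr hx0 _ _ _ hc he).
have -> : mono sg c = (mono sg c *m mono tau^-1%g (fun i => (e (tau^-1 i)%g)^-1)) *m mono tau e.
  by rewrite -mulmxA (mono_inv hr) // mulmx1.
rewrite -mulmxA hw mono_mul.
move=> hlt.
suff hle : score x0 (mono (sg * tau^-1)%g (fun i => c i * (e (tau^-1 (sg i))%g)^-1) *m w)
    <= score x0 w.
  by have := lt_le_trans hlt hle; rewrite ltxx.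
apply: opt_normalized => // i; by rewrite exprMn exprVn hc he invr1 mulr1.
Qed.
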